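(* Let $F:\mathbb{R}^n\rightrightarrows\mathbb{R}^n$ be a (possibly multi-valued) mapping. Consider the discrete-time system with state $x_t\in\mathbb{R}^n$, input $u_t\in\mathbb{R}^n$ and output $y_t\in\mathbb{R}^n$ given by $$x_{t+1}=x_t+u_t,\qquad y_t\in F(x_t+u_t),\qquad t\in\mathbb{N}_0 .$$ Then $F$ has a convex primitive, i.e. there exists a convex function $f:\mathbb{R}^n\to\mathbb{R}$ with $F(x)\subset\partial f(x)$ for all $x\in\mathbb{R}^n$, if and only if this system is passive.
   Context: A trajectory $t\mapsto(x_t,u_t,y_t)$, $t\in\mathbb{N}_0$, is admissible if $x_{t+1}=x_t+u_t$ and $y_t\in F(x_t+u_t)$ for all $t\in\mathbb{N}_0$. The system is passive if there exists a storage function $V:\mathbb{R}^n\to\mathbb{R}$ (which is not required to be nonnegative or bounded from below) such that $V(x_{t_2})\le V(x_{t_1})+\sum_{t=t_1}^{t_2-1}u_t^\top y_t$ for all admissible trajectories and all $t_1,t_2\in\mathbb{N}_0$ with $t_1\le t_2$. $\partial f$ denotes the subdifferential of the convex function $f$. *)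

(* Defs.v *)
From HB Require Import structures.
From mathcomp Require Import all_boot all_order all_algebra.
From mathcomp Require Import boolp classical_sets reals.
Set Implicit Arguments. Unset Strict Implicit. Unset Printing Implicit Defensive.
Import Order.TTheory GRing.Theory Num.Theory.
Local Open Scope ring_scope.
Local Open Scope classical_set_scope.

Definition dotv (R : pzRingType) (n : nat) (u v : 'rV[R]_n) : R :=
  \sum_(i < n) u 0 i * v 0 i.

Definition convex_fun (R : realType) (n : nat) (f : 'rV[R]_n -> R) : Prop :=
  forall (a b : 'rV[R]_n) (l : R), 0 <= l -> l <= 1 ->
    f (l *: a + (1 - l) *: b) <= l * f a + (1 - l) * f b.

Definition subdiff (R : realType) (n : nat) (f : 'rV[R]_n -> R) (x : 'rV[R]_n)
  : set 'rV[R]_n :=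
  [set g | forall z : 'rV[R]_n, f x + dotv g (z - x) <= f z].

Definition admissible (R : realType) (n : nat) (F : 'rV[R]_n -> set 'rV[R]_n)
  (x u y : nat -> 'rV[R]_n) : Prop :=
  forall t : nat, x t.+1 = x t + u t /\ F (x t + u t) (y t).

(* Passivity, with a real-valued storage function (no sign/boundedness condition). *)
Definition passive (R : realType) (n : nat) (F : 'rV[R]_n -> set 'rV[R]_n) : Prop :=
  exists V : 'rV[R]_n -> R,
    forall x u y : nat -> 'rV[R]_n, admissible F x u y ->
    forall t1 t2 : nat, (t1 <= t2)%N ->
      V (x t2) <= V (x t1) + \sum_(t1 <= t < t2) dotv (u t) (y t).

(* Main.v *)
Require Import Defs.
From HB Require Import structures.
From mathcomp Require Import all_boot all_order all_algebra.
From mathcomp Require Import boolp classical_sets reals.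
From mathcomp Require Import ring lra.
Import Order.TTheory GRing.Theory Num.Theory.
Local Open Scope ring_scope.
Local Open Scope classical_set_scope.

Lemma dotv_neg (R : realType) (n : nat) (u y : 'rV[R]_n) :
  dotv y (- u) = - dotv u y.
Proof.
rewrite /dotv -sumrN; apply: eq_bigr => i _; rewrite !mxE; ring.
Qed.

Lemma dotv_aff (R : realType) (n : nat) (w a b z : 'rV[R]_n) (l : R) :
  dotv w (l *: a + (1 - l) *: b - z) = l * dotv w (a - z) + (1 - l) * dotv w (b - z).
Proof.
rewrite /dotv !mulr_sumr -big_split; apply: eq_bigr => i _; rewrite !mxE /=; ring.
Qed.

Theorem theorem3 (R : realType) (n : nat) (F : 'rV[R]_n -> set 'rV[R]_n) :
  (exists f : 'rV[R]_n -> R, convex_fun f /\ forall x : 'rV[R]_n, F x `<=` subdiff f x)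
  <-> passive F.
Proof.
split.
- move=> [f [_ Hf]]; exists f => x u y Had t1 t2 /subnKC <-.
  elim: (t2 - t1)%N => [|k IH].
    by rewrite addn0 big_geq // addr0.
  rewrite addnS big_nat_recr /= ?leq_addr //.
  have [Hx HF] := Had (t1 + k)%N.
  have := Hf _ _ HF (x (t1 + k)%N).
  rewrite opprD addrA subrr add0r dotv_neg -Hx => H.
  apply: le_trans (_ : f (x (t1 + k)%N) + dotv (u (t1 + k)%N) (y (t1 + k)%N) <= _).
    lra.
  by rewrite addrA lerD2r.
- move=> [V HV].
  have step : forall x z w, F z w -> V z + dotv w (x - z) <= V x.
    move=> x z w Fzw.
    pose xs := fun t : nat => (if t is 0 then x else z : 'rV[R]_n).
    pose us := fun t : nat => (if t is 0 then z - x else 0 : 'rV[R]_n).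
    have Had : admissible F xs us (fun _ => w).
      move=> [|t] /=; first by rewrite addrC subrK.
      by rewrite addr0.
    have := HV _ _ _ Had 0%N 1%N erefl.
    rewrite big_nat1 /= => H.
    have E : dotv (z - x) w = - dotv w (x - z).
      rewrite /dotv -sumrN; apply: eq_bigr => i _; rewrite !mxE; ring.
    rewrite E in H; lra.
  case: (pselect (exists z w, F z w)) => [[z0 [w0 Fzw0]]|nF]; last first.
    exists (fun _ => 0); split.
      by move=> a b l _ _; rewrite !mulr0 addr0.
    by move=> x w Fxw; exfalso; apply: nF; exists x, w.
  pose S x := [set r : R | exists z w, F z w /\ r = V z + dotv w (x - z)].
  have Sne : forall x, S x !=set0.
    by move=> x; exists (V z0 + dotv w0 (x - z0)); exists z0, w0.
  have Sub : forall x, ubound (S x) (V x).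
    by move=> x r [z [w [Fzw ->]]]; apply: step.
  have Shs : forall x, has_sup (S x).
    by move=> x; split; [exact: Sne | exists (V x); exact: Sub].
  have Sin : forall x z w, F z w -> V z + dotv w (x - z) <= sup (S x).
    by move=> x z w Fzw; apply: sup_upper_bound => //; exists z, w.
  exists (fun x => sup (S x)); split.
    move=> a b l l0 l1; apply: ge_sup => // r [z [w [Fzw ->]]].
    rewrite dotv_aff.
    have Ha := Sin a z w Fzw; have Hb := Sin b z w Fzw.
    have -> : V z + (l * dotv w (a - z) + (1 - l) * dotv w (b - z)) =
      l * (V z + dotv w (a - z)) + (1 - l) * (V z + dotv w (b - z)) by ring.
    apply: lerD; apply: ler_wpM2l => //; lra.
  move=> x w Fxw z /=.
  have H1 := Sin z x w Fxw.
  have H2 : sup (S x) <= V x by apply: ge_sup => //; exact: Sub.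
  lra.
Qed.
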